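(* Let $k$ be a field, $A$ a noetherian $k$-algebra, $\Delta$ a finite set and $\Gamma$ a totally ordered abelian group. The natural map $$\iota_0:\bigotimes_{\alpha\in\Delta,k}A[[t_\alpha^\Gamma]]\longrightarrow\Big(\bigotimes_{\alpha\in\Delta,k}A\Big)[[t_\alpha^\Gamma\mid\alpha\in\Delta]]$$ is injective. Moreover, for every finite family $(\underline{\gamma_i})_{1\le i\le m}$ of multi-indices in $\Gamma_{\ge0}^\Delta$, one has $\iota_0^{-1}\big((t^{\underline{\gamma_i}}\mid1\le i\le m)\big)=(t^{\underline{\gamma_i}}\mid1\le i\le m)$.
   Context: For a ring $B$ and totally ordered abelian groups $(\Gamma_\alpha)_{\alpha\in\Delta}$ ($\Delta$ finite), the multivariable Hahn–Mal'cev series ring $B[[t_\alpha^{\Gamma_\alpha}\mid\alpha\in\Delta]]$ is the set of formal sums $\sum_{\underline{\gamma}\in\prod_\alpha\Gamma_{\alpha,\ge0}}a_{\underline{\gamma}}t^{\underline{\gamma}}$ ($a_{\underline\gamma}\in B$) such that for every $\underline{\delta}\in\prod_\alpha\Gamma_{\alpha,\ge0}$ and every $\alpha\in\Delta$, the set $\{\gamma_\alpha\le\delta_\alpha\mid\exists\underline{\gamma}'\in\prod_{\beta\ne\alpha}\Gamma_{\beta,[0,\delta_\beta]},\ a_{(\gamma_\alpha,\underline{\gamma}')}\ne0\}$ is well ordered; it is a $B$-algebra with termwise addition and the convolution product. For $|\Delta|=1$ this is the usual Hahn series ring $B[[t^\Gamma]]$. Here all $\Gamma_\alpha=\Gamma$;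 $\iota_0$ is induced by the maps $A[[t_\alpha^\Gamma]]\to(\bigotimes_kA)[[t_\beta^\Gamma\mid\beta\in\Delta]]$ placing coefficients in the $\alpha$-th tensor factor; $t^{\underline{\gamma}}=\prod_\alpha t_\alpha^{\gamma_\alpha}$, and the ideal on the left is generated by the elementary tensors $\otimes_\alpha t_\alpha^{\gamma_{i,\alpha}}$. *)

(* Defs.v *)
From HB Require Import structures.
From mathcomp Require Import all_boot all_order all_algebra.
Set Implicit Arguments.
Unset Strict Implicit.
Unset Printing Implicit Defensive.
Import Order.TTheory GRing.Theory.
Local Open Scope ring_scope.

Record ordered_group (G : zmodType) (le : rel G) : Prop := {
  og_refl  : reflexive le;
  og_anti  : antisymmetric le;
  og_trans : transitive le;
  og_total : total le;
  og_add   : forall x y z, le x y -> le (x + z) (y + z) }.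

Definition well_ordered (G : Type) (le : rel G) (S : G -> Prop) : Prop :=
  forall T : G -> Prop, (forall x, T x -> S x) -> (exists x, T x) ->
  exists2 m, T m & forall y, T y -> le m y.

Definition is_ideal (R : comPzRingType) (I : R -> Prop) : Prop :=
  [/\ I 0, (forall x y, I x -> I y -> I (x + y)) & (forall a x, I x -> I (a * x))].

Definition finitely_generated_ideal (R : comPzRingType) (I : R -> Prop) : Prop :=
  exists s : seq R, forall x,
    I x <-> exists c : 'I_(size s) -> R, x = \sum_(i < size s) c i * s`_i.

Definition noetherian (R : comPzRingType) : Prop :=
  forall I : R -> Prop, is_ideal I -> finitely_generated_ideal I.

(* Let V be a k-vector space, presented as a type with addition [add],
   scalar multiplication [scale], and a predicate [P] cutting out the actual
   subspace (P = True when V is the whole type).  The tensor product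
   (over k) of the family (V)_{alpha in D} is the free k-vector space on
   D-tuples of vectors modulo the multilinearity relations.  We represent
   elements of the free vector space by formal sums
     [:: (c_1, f_1); ...; (c_n, f_n)]  =  sum_j c_j (tensor_alpha f_j alpha)
   and [teq] is the congruence "equal in the tensor product". *)
Section Tensor.
Variables (k : fieldType) (V : Type) (add : V -> V -> V) (scale : k -> V -> V)
          (P : V -> Prop) (D : finType).

Definition fsum := seq (k * {ffun D -> V}).

Definition fs_scale (c : k) (x : fsum) : fsum := [seq (c * p.1, p.2) | p <- x].

Definition tupd (f : {ffun D -> V}) (a : D) (u : V) : {ffun D -> V} :=
  [ffun b => if b == a then u else f b].

Inductive teq : fsum -> fsum -> Prop :=
| teq_refl x : teq x x
| teq_sym x y : teq x y -> teq y x
| teq_trans x y z : teq x y -> teq y z -> teq x z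
| teq_cat x x' y y' : teq x x' -> teq y y' -> teq (x ++ y) (x' ++ y')
| teq_scale c x y : teq x y -> teq (fs_scale c x) (fs_scale c y)
| teq_swap x y : teq (x ++ y) (y ++ x)
| teq_zero (f : {ffun D -> V}) : teq [:: (0, f)] [::]
| teq_merge c d (f : {ffun D -> V}) : teq [:: (c, f); (d, f)] [:: (c + d, f)]
| teq_add (f : {ffun D -> V}) (a : D) (u v : V) : (forall b, b != a -> P (f b)) -> P u -> P v ->
    teq [:: (1, tupd f a (add u v))] [:: (1, tupd f a u); (1, tupd f a v)]
| teq_smul (f : {ffun D -> V}) (a : D) (c : k) (u : V) : (forall b, b != a -> P (f b)) -> P u ->
    teq [:: (1, tupd f a (scale c u))] [:: (c, tupd f a u)].

Definition fs_in (V0 : V) (x : fsum) : Prop := forall i, (i < size x)%N -> forall a, P ((nth (0, [ffun=> V0]) x i).2 a).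

End Tensor.

Section Hahn.
Variables (G : zmodType) (le : rel G).

(* one-variable Hahn series B[[t^G]] over a ring A, as coefficient functions
   G -> A vanishing outside G_{>=0} (the |Delta| = 1 case of the definition) *)
Definition hahn1 (A : pzRingType) (f : G -> A) : Prop :=
  (forall g, f g != 0 -> le 0 g) /\
  forall d, le 0 d -> well_ordered le (fun g => le g d /\ le 0 g /\ f g != 0).

(* monomial shift: f * t^g *)
Definition shift1 (A : pzRingType) (g : G) (f : G -> A) : G -> A :=
  fun x => if le g x then f (x - g) else 0.

(* multivariable Hahn series B[[t_alpha^G | alpha in D]] with coefficients
   in B given as a type with a predicate [isz] ("is zero in B") *)
Definition mhahn (D : finType) (B : Type) (isz : B -> Prop)
    (a : {ffun D -> G} -> B) : Prop :=
  (forall g, ~ isz (a g) -> forall al, le 0 (g al)) /\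
  forall d : {ffun D -> G}, (forall al, le 0 (d al)) -> forall al,
    well_ordered le (fun x => le x (d al) /\
      exists g : {ffun D -> G}, [/\ g al = x,
        (forall be, be != al -> le 0 (g be) /\ le (g be) (d be)) & ~ isz (a g)]).

End Hahn.

Section Iota.
Variables (k : fieldType) (A : comAlgType k) (G : zmodType) (le : rel G) (D : finType).

Definition tA := fsum k A D.
Definition teqA : tA -> tA -> Prop :=
  @teq k A (fun u v : A => u + v) (fun (c : k) (u : A) => c *: u) (fun _ => True) D.

Definition tH := fsum k (G -> A) D.
Definition hadd (u v : G -> A) : G -> A := fun x => u x + v x.
Definition hscale (c : k) (u : G -> A) : G -> A := fun x => c *: u x.
Definition teqH : tH -> tH -> Prop := @teq k (G -> A) hadd hscale (hahn1 le (A:=A)) D.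
Definition tH_in (x : tH) : Prop := @fs_in k (G -> A) (hahn1 le (A:=A)) D (fun _ => 0) x.

(* target ring (tensor_alpha A)[[t_alpha^G | alpha in D]]:
   coefficient functions {ffun D -> G} -> tA *)
Definition tseries := {ffun D -> G} -> tA.
Definition tseries_ok (a : tseries) : Prop :=
  mhahn le (fun b : tA => teqA b [::]) a.

Definition iota0 (x : tH) : tseries :=
  fun g => [seq (p.1, [ffun al => (p.2 : {ffun D -> G -> A}) al (g al)]) | p <- (x : seq (k * {ffun D -> G -> A}))].

Definition mnonneg (g : {ffun D -> G}) := forall al, le 0 (g al).
Definition mle (g d : {ffun D -> G}) : bool := [forall al, le (g al) (d al)].
Definition msub (d g : {ffun D -> G}) : {ffun D -> G} := [ffun al => d al - g al].

(* membership of a series in the ideal (t^{g_i} | i < m) of the target ring: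
   a = sum_i t^{g_i} h_i with h_i in the target ring
   (the product with the monomial t^{g_i} is the shift) *)
Definition in_target_ideal (m : nat) (gs : 'I_m -> {ffun D -> G}) (a : tseries) : Prop :=
  exists h : 'I_m -> tseries, (forall i, tseries_ok (h i)) /\
    forall d, teqA (a d)
      (\big[cat/[::]]_(i < m) (if (mle (gs i) d) then h i (msub d (gs i)) else [::]))
    .

(* elementary tensor (tensor_alpha t_alpha^{g alpha}) times z, i.e. the
   product in the tensor product of k-algebras: factorwise shift *)
Definition tH_mul_mono (g : {ffun D -> G}) (z : tH) : tH :=
  [seq (p.1, [ffun al => shift1 le (g al) ((p.2 : {ffun D -> G -> A}) al)]) | p <- (z : seq (k * {ffun D -> G -> A}))].

Definition in_source_ideal (m : nat) (gs : 'I_m -> {ffun D -> G}) (x : tH) : Prop :=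
  exists z : 'I_m -> tH, (forall i, tH_in (z i)) /\
    teqH x (\big[cat/[::]]_(i < m) tH_mul_mono (gs i) (z i)).

End Iota.

(* Main.v *)
Require Import Defs.
From HB Require Import structures.
From mathcomp Require Import all_boot all_order all_algebra.
From mathcomp Require boolp classical_sets.
From Stdlib Require List.
From mathcomp Require Import ring.
Set Implicit Arguments. Unset Strict Implicit. Unset Printing Implicit Defensive.
Import GRing.Theory.
Local Open Scope ring_scope.

Lemma classic (P : Prop) : P \/ ~ P.
Proof. by case: (boolp.pselect P); [left|right]. Qed.
Lemma funext (X Y : Type) (f g : X -> Y) : (forall x, f x = g x) -> f = g.
Proof. move=> H; exact: boolp.functional_extensionality_dep. Qed.

Section TeqGen.
Variables (k : fieldType) (V : Type) (add : V -> V -> V) (scale : k -> V -> V)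
          (P : V -> Prop) (D : finType).
Local Notation T := (@teq k V add scale P D).
Lemma Trefl x : T x x. Proof. exact: teq_refl. Qed.
Lemma Tmerge c d f : T [:: (c, f); (d, f)] [:: (c + d, f)]. Proof. exact: teq_merge. Qed.
Lemma Tzero f : T [:: (0, f)] [::]. Proof. exact: teq_zero. Qed.
Lemma Tswap x y : T (x ++ y) (y ++ x). Proof. exact: teq_swap. Qed.

Lemma T_catl x y z : T x y -> T (x ++ z) (y ++ z).
Proof. by move=> H; apply: teq_cat => //; apply: teq_refl. Qed.
Lemma T_catr x y z : T x y -> T (z ++ x) (z ++ y).
Proof. by move=> H; apply: teq_cat => //; apply: teq_refl. Qed.
Lemma T_nil2 x y : T x [::] -> T y [::] -> T (x ++ y) [::].
Proof. by move=> H1 H2; have := teq_cat H1 H2. Qed.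

Lemma T_big_nil m (F : 'I_m -> fsum k V D) :
  (forall i, T (F i) [::]) -> T (\big[cat/[::]]_(i < m) F i) [::].
Proof.
move=> H; elim/big_ind: _ => //; first exact: Trefl.
by move=> x y; apply: T_nil2.
Qed.

Lemma T_big m (F F' : 'I_m -> fsum k V D) :
  (forall i, T (F i) (F' i)) -> T (\big[cat/[::]]_(i < m) F i) (\big[cat/[::]]_(i < m) F' i).
Proof.
move=> H; elim/big_ind2: _ => //; first exact: Trefl.
by move=> x1 x2 y1 y2; apply: teq_cat.
Qed.

Lemma T_all_nil x : (forall p, List.In p x -> T [:: p] [::]) -> T x [::].
Proof.
elim: x => [|p x IH] H; first exact: Trefl.
rewrite -cat1s; apply: T_nil2; first by apply: H; left.
by apply: IH => q Hq; apply: H; right.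
Qed.

Lemma T_neg x : T (fs_scale (-1) x ++ x) [::].
Proof.
elim: x => [|[c f] x IH] /=; first exact: Trefl.
rewrite -cat1s -[(c, f) :: x]cat1s.
have E1 : T ([:: (-1 * c, f)] ++ fs_scale (-1) x ++ [:: (c, f)] ++ x)
            ([:: (-1 * c, f)] ++ [:: (c, f)] ++ (fs_scale (-1) x ++ x)).
  apply: T_catr; rewrite !catA; apply: T_catl; exact: Tswap.
apply: teq_trans E1 _; rewrite catA /=.
have E2 : T [:: (-1 * c, f); (c, f)] [::].
  apply: teq_trans (Tmerge _ _ _) _.
  rewrite mulN1r addNr; exact: Tzero.
exact: T_nil2 E2 IH.
Qed.

Lemma T_neg' x : T (x ++ fs_scale (-1) x) [::].
Proof. exact: teq_trans (Tswap _ _) (T_neg x). Qed.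

Lemma T_sub x y : T x y -> T (x ++ fs_scale (-1) y) [::].
Proof. move=> H; exact: teq_trans (T_catl _ H) (T_neg' y). Qed.

Lemma T_of_sub x y : T (x ++ fs_scale (-1) y) [::] -> T x y.
Proof.
move=> H.
apply: (@teq_trans _ _ _ _ _ _ _ (x ++ (fs_scale (-1) y ++ y))).
  rewrite -{1}[x]cats0; apply: T_catr; apply: teq_sym; exact: T_neg.
rewrite catA; apply: teq_trans (T_catl _ H) _; exact: Trefl.
Qed.

Lemma tupd_id (f : {ffun D -> V}) a : tupd f a (f a) = f.
Proof. by apply/ffunP => b; rewrite ffunE; case: eqP => // ->. Qed.

Lemma T_zero_factor (c : k) (f : {ffun D -> V}) a u :
  (forall b, b != a -> P (f b)) -> P u -> f a = scale 0 u -> T [:: (c, f)] [::].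
Proof.
move=> Pf Pu fa.
have -> : [:: (c, f)] = fs_scale c [:: (1, tupd f a (scale 0 u))] by rewrite /= mulr1 -fa tupd_id.
have -> : [::] = fs_scale c [::] by [].
apply: teq_scale; apply: teq_trans (teq_smul add scale 0 Pf Pu) _.
apply: (teq_trans _ (Tzero (tupd f a u))); exact: Trefl.
Qed.

Lemma T_merge_all (f : {ffun D -> V}) x : (forall p, List.In p x -> p.2 = f) ->
  T x [:: (\sum_(p <- x) p.1, f)].
Proof.
elim: x => [|[c g] x IH] H /=.
  rewrite big_nil; apply: teq_sym; exact: Tzero.
rewrite big_cons /=; have -> : g = f by apply: (H (c, g)); left.
rewrite -cat1s; apply: teq_trans (T_catr _ (IH _)) _; first by move=> p Hp; apply: H; right.
exact: Tmerge.
Qed.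

Lemma T_bigcat_swap m (F F' : 'I_m -> fsum k V D) :
  T ((\big[cat/[::]]_(i < m) F i) ++ (\big[cat/[::]]_(i < m) F' i))
    (\big[cat/[::]]_(i < m) (F i ++ F' i)).
Proof.
elim: m F F' => [|m IH] F F'; first by rewrite !big_ord0; exact: Trefl.
rewrite !big_ord_recr /=.
set Fs := \big[cat/[::]]_(i < m) _; set F's := \big[cat/[::]]_(i < m) _.
have E : T ((Fs ++ F ord_max) ++ (F's ++ F' ord_max)) ((Fs ++ F's) ++ (F ord_max ++ F' ord_max)).
  rewrite -!catA; apply: T_catr; rewrite !catA; apply: T_catl; exact: Tswap.
exact: teq_trans E (T_catl _ (IH _ _)).
Qed.
End TeqGen.
Section Func.
Variables (k : fieldType) (A : lmodType k).

Definition linf (phi : A -> k) := forall c x y, phi (c *: x + y) = c * phi x + phi y.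

Lemma exists_functional (a : A) : a != 0 -> exists phi, linf phi /\ phi a = 1.
Proof.
move=> a0.
pose Lin (B : A * k -> Prop) :=
  [/\ (forall c p q, B p -> B q -> B (c *: p.1 + q.1, c * p.2 + q.2)),
      (forall x s t, B (x,s) -> B (x,t) -> s = t) & B (a, 1)].
pose PP (B : A * k -> Prop) := (forall p, ~ B p) \/ Lin B.
have [A0 [PA0 maxA0]] : exists A0, PP A0 /\ forall B, classical_sets.proper A0 B -> ~ PP B.
  apply: classical_sets.Zorn_bigcup => F FP Ftot.
  case: (classic (exists X, F X /\ exists p, X p)) => [[X [FX [p Xp]]]|nF]; last first.
    left=> p [X FX Xp]; apply: nF; exists X; split=> //; by exists p.
  have LX : forall Y, F Y -> (exists p, Y p) -> Lin Y.
    move=> Y FY [q Yq]; case: (FP Y FY) => // /(_ q); by [].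
  right; split.
  - move=> c p0 q0 [X1 F1 X1p] [X2 F2 X2q].
    case: (Ftot X1 X2 F1 F2) => S12.
    + have [cl _ _] := LX X2 F2 (ex_intro _ q0 X2q).
      exists X2 => //; apply: cl => //; exact: S12.
    + have [cl _ _] := LX X1 F1 (ex_intro _ p0 X1p).
      exists X1 => //; apply: cl => //; exact: S12.
  - move=> x s t [X1 F1 X1p] [X2 F2 X2q].
    case: (Ftot X1 X2 F1 F2) => S12.
    + have [_ fn _] := LX X2 F2 (ex_intro _ _ X2q).
      apply: (fn x) => //; exact: S12.
    + have [_ fn _] := LX X1 F1 (ex_intro _ _ X1p).
      apply: (fn x) => //; exact: S12.
  - have [_ _ ?] := LX X FX (ex_intro _ p Xp); by exists X.
have LA0 : Lin A0.
  case: PA0 => // empt; exfalso.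
  apply: (maxA0 (fun p => p.1 = p.2 *: a)).
    split; first by move=> p /empt.
    move=> /(_ (a, 1)); rewrite /= scale1r => /(_ erefl) /empt //.
  right; split => /=.
  - by move=> c [x s] [y t] /= -> ->; rewrite scalerDl scalerA.
  - move=> x s t -> /eqP; rewrite -subr_eq0 -scalerBl scaler_eq0 (negbTE a0) orbF subr_eq0.
    by move=> /eqP.
  - by rewrite scale1r.
have [clA fnA A1] := LA0.
have A00 : A0 (0, 0).
  by have := clA (-1) _ _ A1 A1; rewrite /= scaleN1r addNr mulN1r addNr.
have tot : forall v, exists s, A0 (v, s).
  move=> v; case: (classic (exists s, A0 (v, s))) => // nv; exfalso.
  pose B (p : A * k) := exists x s c, A0 (x, s) /\ p = (x + c *: v, s).
  apply: (maxA0 B).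
    split; rewrite /classical_sets.subset.
      move=> [x s] H; exists x, s, 0; by rewrite scale0r addr0.
    move=> sub; apply: nv; exists 0; apply: sub.
    by exists 0, 0, 1; rewrite scale1r add0r.
  right; split.
  - move=> c [y1 t1] [y2 t2] [x1 [s1 [c1 [H1 [-> ->]]]]] [x2 [s2 [c2 [H2 [-> ->]]]]] /=.
    exists (c *: x1 + x2), (c * s1 + s2), (c * c1 + c2); split; first exact: clA H1 H2.
    congr (_, _); rewrite scalerDr scalerDl scalerA; rewrite -!addrA; congr (_ + _).
    by rewrite addrCA.
  - move=> y t1 t2 [x1 [s1 [c1 [H1 [e1 ->]]]]] [x2 [s2 [c2 [H2 [e2 ->]]]]].
    have ee : x1 + c1 *: v = x2 + c2 *: v by rewrite -e1 -e2.
    case: (eqVneq c1 c2) => [ec|nc].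
      move: ee; rewrite ec => /addIr ex; apply: fnA H2; by rewrite -ex.
    exfalso; apply: nv.
    have Hd : A0 (x1 - x2, s1 - s2).
      have := clA (-1) _ _ H2 H1; rewrite /= scaleN1r mulN1r.
      by rewrite [- x2 + _]addrC [- s2 + _]addrC.
    have ev : v = (c2 - c1)^-1 *: (x1 - x2) + 0.
      rewrite addr0; apply: (@scalerI _ _ (c2 - c1)); first by rewrite subr_eq0 eq_sym.
      rewrite scalerA mulfV ?subr_eq0 1?eq_sym // scale1r scalerBl.
      have ex1 : x1 = x2 + c2 *: v - c1 *: v by rewrite -ee addrK.
      by rewrite ex1 [RHS]addrC !addrA addNr add0r.
    exists ((c2 - c1)^-1 * (s1 - s2) + 0); rewrite ev; exact: clA Hd A00.
  - by exists a, 1, 0; rewrite scale0r addr0.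
pose phi v := projT1 (boolp.cid (tot v)).
have Hphi v : A0 (v, phi v) := projT2 (boolp.cid (tot v)).
exists phi; split.
  move=> c x y; apply: fnA (Hphi _) _; exact: clA (Hphi x) (Hphi y).
exact: fnA (Hphi a) A1.
Qed.
End Func.

Section WO.
Variables (G : zmodType) (le : rel G) (Hle : ordered_group le).
Let ltr := og_trans Hle.
Let lrefl := og_refl Hle.

Lemma wo_sub (S S' : G -> Prop) : well_ordered le S -> (forall x, S' x -> S x) -> well_ordered le S'.
Proof. move=> W sub T TS ne; apply: W => // x /TS; exact: sub. Qed.

Lemma wo_union (S1 S2 : G -> Prop) : well_ordered le S1 -> well_ordered le S2 ->
  well_ordered le (fun x => S1 x \/ S2 x).
Proof.
move=> W1 W2 T TS [x0 Tx0].
case: (classic (exists x, T x /\ S1 x)) => [[x1 [Tx1 S1x1]]|n1];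
case: (classic (exists x, T x /\ S2 x)) => [[x2 [Tx2 S2x2]]|n2].
- have [m1 [T1 _] M1] := W1 (fun x => T x /\ S1 x) (fun x H => proj2 H) (ex_intro _ x1 (conj Tx1 S1x1)).
  have [m2 [T2 _] M2] := W2 (fun x => T x /\ S2 x) (fun x H => proj2 H) (ex_intro _ x2 (conj Tx2 S2x2)).
  case/orP: (og_total Hle m1 m2) => L.
  + exists m1 => // y Ty; case: (TS y Ty) => Sy; first exact: M1.
    exact: ltr L (M2 _ (conj Ty Sy)).
  + exists m2 => // y Ty; case: (TS y Ty) => Sy; last exact: M2.
    exact: ltr L (M1 _ (conj Ty Sy)).
- have [m1 [T1 _] M1] := W1 (fun x => T x /\ S1 x) (fun x H => proj2 H) (ex_intro _ x1 (conj Tx1 S1x1)).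
  exists m1 => // y Ty; case: (TS y Ty) => Sy; first exact: M1.
  by exfalso; apply: n2; exists y.
- have [m2 [T2 _] M2] := W2 (fun x => T x /\ S2 x) (fun x H => proj2 H) (ex_intro _ x2 (conj Tx2 S2x2)).
  exists m2 => // y Ty; case: (TS y Ty) => Sy; last exact: M2.
  by exfalso; apply: n1; exists y.
- exfalso; case: (TS x0 Tx0) => S; [apply: n1|apply: n2]; by exists x0.
Qed.

Lemma le_addr a b c : le a b -> le (a + c) (b + c).
Proof. exact: og_add. Qed.
Lemma le_addr_iff a b c : le (a + c) (b + c) = le a b.
Proof.
apply/idP/idP; last exact: le_addr.
by move/(le_addr (-c)); rewrite !addrK.
Qed.
Lemma le_sub0 c x : le 0 (x - c) = le c x.
Proof. by rewrite -(le_addr_iff c x (-c)) addrN. Qed.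
Lemma le0_add a b : le 0 a -> le 0 b -> le 0 (a + b).
Proof. move=> Ha Hb; apply: ltr Hb _; by have := le_addr b Ha; rewrite add0r. Qed.

Lemma wo_translate (S : G -> Prop) c : well_ordered le S -> well_ordered le (fun y => S (y + c)).
Proof.
move=> W T TS [y0 Ty0].
have TS' : forall x, T (x - c) -> S x by move=> x Tx; have := TS _ Tx; rewrite subrK.
have ne : exists x, T (x - c) by exists (y0 + c); rewrite addrK.
have [m Tm M] := W (fun x => T (x - c)) TS' ne.
exists (m - c) => // y Ty; rewrite -(le_addr_iff _ _ c) subrK; apply: M; by rewrite addrK.
Qed.

End WO.

Section HahnL.
Variables (k : fieldType) (A : comAlgType k) (G : zmodType) (le : rel G) (Hle : ordered_group le).
Local Notation H1 := (@hahn1 G le A).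

Lemma hahn1_mono (f g : G -> A) : H1 f -> (forall x, g x != 0 -> f x != 0) -> H1 g.
Proof.
move=> [s w] m; split; first by move=> x /m /s.
move=> d d0; apply: wo_sub (w d d0) _ => x [? [? nz]]; split => //; split => //; exact: m.
Qed.

Lemma hahn1_0 : H1 (fun _ => 0).
Proof. apply: (hahn1_mono (f := fun _ => 0)); last by move=> x /eqP.
split; first by move=> x /eqP. move=> d _ T TS [x Tx]; by case: (TS x Tx) => _ [_ /eqP].
Qed.

Lemma hahn1_add (u v : G -> A) : H1 u -> H1 v -> H1 (fun x => u x + v x).
Proof.
move=> [su wu] [sv wv]; split.
  move=> x nz; case: (eqVneq (u x) 0) => [e|/su //]; apply: sv; by move: nz; rewrite e add0r.
move=> d d0; apply: wo_sub (wo_union Hle (wu d d0) (wv d d0)) _ => x [L [L0 nz]].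
case: (eqVneq (u x) 0) => [e|nu]; last by left.
by right; move: nz; rewrite e add0r.
Qed.

Lemma hahn1_scale c (u : G -> A) : H1 u -> H1 (fun x => c *: u x).
Proof. move=> h; apply: hahn1_mono h _ => x; by rewrite scaler_eq0 negb_or => /andP[]. Qed.

Lemma hahn1_comb c (u v : G -> A) : H1 u -> H1 v -> H1 (fun x => c *: u x + v x).
Proof. move=> hu hv; apply: hahn1_add => //; exact: hahn1_scale. Qed.

Lemma hahn1_sum r (lam : 'I_r -> k) (e : 'I_r -> G -> A) :
  (forall i, H1 (e i)) -> H1 (fun x => \sum_(i < r) lam i *: e i x).
Proof.
elim: r lam e => [|r IH] lam e He.
  by apply: (hahn1_mono hahn1_0) => x; rewrite big_ord0.
apply: (hahn1_mono (hahn1_add (IH (fun i => lam (widen_ord (leqnSn r) i)) (fun i => e (widen_ord (leqnSn r) i)) (fun i => He _))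
  (hahn1_scale (lam ord_max) (He ord_max)))) => x; by rewrite big_ord_recr.
Qed.

Lemma hahn1_cut c (f : G -> A) : H1 f -> H1 (fun x => if le c x then f x else 0).
Proof. move=> h; apply: hahn1_mono h _ => x; case: (le c x) => //; by rewrite eqxx. Qed.

Lemma hahn1_unshift c (f : G -> A) : le 0 c -> H1 f -> H1 (fun x => if le 0 x then f (x + c) else 0).
Proof.
move=> c0 [s w]; split.
  by move=> x; case: (le 0 x) => //; rewrite eqxx.
move=> d d0; have dc0 : le 0 (d + c) by apply: le0_add.
apply: (wo_sub (wo_translate Hle (c:=c) (w (d + c) dc0))) => x [L [L0 nz]] /=.
rewrite L0 in nz; split; first by rewrite le_addr_iff.
split => //; exact: le0_add.
Qed.

End HahnL.

Section Ev.
Variables (k : fieldType) (V : Type) (add : V -> V -> V) (scale : k -> V -> V)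
          (P : V -> Prop) (D : finType).
Local Notation T := (@teq k V add scale P D).

Definition ev (psi : D -> V -> k) (x : fsum k V D) : k :=
  \sum_(p <- x) p.1 * \prod_(a : D) psi a (p.2 a).

Definition upd (psi : D -> V -> k) a (chi : V -> k) : D -> V -> k :=
  fun b => if b == a then chi else psi b.

Lemma prod_tupd (psi : D -> V -> k) (f : {ffun D -> V}) a u :
  \prod_(b : D) psi b (tupd f a u b) = psi a u * \prod_(b | b != a) psi b (f b).
Proof.
rewrite (bigD1 a) //= ffunE eqxx; congr (_ * _); apply: eq_bigr => b /negPf nb.
by rewrite ffunE nb.
Qed.

Lemma prod_upd (psi : D -> V -> k) a chi (f : {ffun D -> V}) :
  \prod_(b : D) upd psi a chi b (f b) = chi (f a) * \prod_(b | b != a) psi b (f b).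
Proof.
rewrite (bigD1 a) //= /upd eqxx; congr (_ * _); apply: eq_bigr => b /negPf nb.
by rewrite nb.
Qed.

Lemma ev_cat psi x y : ev psi (x ++ y) = ev psi x + ev psi y.
Proof. by rewrite /ev big_cat. Qed.

Lemma ev_scale psi c x : ev psi (fs_scale c x) = c * ev psi x.
Proof. rewrite /ev big_map mulr_sumr; apply: eq_bigr => p _ /=; by rewrite mulrA. Qed.

Lemma ev_nil psi : ev psi [::] = 0.
Proof. by rewrite /ev big_nil. Qed.

Lemma ev1 psi c f : ev psi [:: (c, f)] = c * \prod_(a : D) psi a (f a).
Proof. by rewrite /ev big_cons big_nil addr0. Qed.

Lemma ev_teq (psi : D -> V -> k) :
  (forall a u v, P u -> P v -> psi a (add u v) = psi a u + psi a v) ->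
  (forall a c u, P u -> psi a (scale c u) = c * psi a u) ->
  forall x y, T x y -> ev psi x = ev psi y.
Proof.
move=> Hadd Hsc x y; elim => {x y}.
- by [].
- by move=> x y _ ->.
- by move=> x y z _ -> _ ->.
- by move=> x x' y y' _ E1 _ E2; rewrite !ev_cat E1 E2.
- by move=> c x y _ E; rewrite !ev_scale E.
- by move=> x y; rewrite !ev_cat addrC.
- by move=> f; rewrite ev1 ev_nil mul0r.
- by move=> c d f; rewrite /ev !big_cons big_nil /= !addr0 mulrDl.
- move=> f a u v Pf Pu Pv; rewrite /ev !big_cons !big_nil /= !addr0 !mul1r !prod_tupd.
  by rewrite Hadd // mulrDl.
- by move=> f a c u Pf Pu; rewrite !ev1 !mul1r !prod_tupd Hsc // mulrA.
Qed.

Lemma ev_upd_comb (psi : D -> V -> k) a c chi1 chi2 x :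
  ev (upd psi a (fun w => c * chi1 w + chi2 w)) x =
  c * ev (upd psi a chi1) x + ev (upd psi a chi2) x.
Proof.
rewrite /ev mulr_sumr -big_split; apply: eq_bigr => p _ /=.
rewrite !prod_upd; by rewrite mulrDl mulrDr !mulrA [c * p.1]mulrC.
Qed.

Lemma upd_id (psi : D -> V -> k) a : upd psi a (psi a) = psi.
Proof. apply: boolp.functional_extensionality_dep => b; rewrite /upd; by case: eqP => // ->. Qed.

End Ev.

Section Iota0.
Variables (k : fieldType) (A : comAlgType k) (G : zmodType) (le : rel G) (D : finType).
Local Notation TA := (@teqA k A D).
Local Notation TH := (@teqH k A G le D).
Local Notation tH := (tH A G D).
Local Notation tA := (tA A D).

Lemma tupd_eval (f : {ffun D -> G -> A}) a u (g : {ffun D -> G}) :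
  [ffun al => tupd f a u al (g al)] = tupd [ffun al => f al (g al)] a (u (g a)).
Proof. by apply/ffunP => b; rewrite !ffunE; case: eqP => // ->. Qed.

Lemma iota0_cat (x y : tH) g : iota0 (x ++ y) g = iota0 x g ++ iota0 y g.
Proof. by rewrite /iota0 map_cat. Qed.

Lemma iota0_scale c (x : tH) g : iota0 (fs_scale c x) g = fs_scale c (iota0 x g).
Proof. by rewrite /iota0 /fs_scale -!map_comp. Qed.

Lemma iota0_bigcat m (F : 'I_m -> tH) g :
  iota0 (\big[cat/[::]]_(i < m) F i) g = \big[cat/[::]]_(i < m) iota0 (F i) g.
Proof.
elim: m F => [|m IH] F; first by rewrite !big_ord0.
by rewrite !big_ord_recr iota0_cat IH.
Qed.

Lemma iota0_teq (x y : tH) : TH x y -> forall g, TA (iota0 x g) (iota0 y g).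
Proof.
elim => {x y}.
- move=> x g; exact: teq_refl.
- move=> x y _ IH g; exact: teq_sym (IH g).
- move=> x y z _ I1 _ I2 g; exact: teq_trans (I1 g) (I2 g).
- move=> x x' y y' _ I1 _ I2 g; rewrite !iota0_cat; exact: teq_cat (I1 g) (I2 g).
- move=> c x y _ I g; rewrite !iota0_scale; exact: teq_scale (I g).
- move=> x y g; rewrite !iota0_cat; exact: teq_swap.
- move=> f g; exact: teq_zero.
- move=> c d f g; exact: teq_merge.
- move=> f a u v _ _ _ g; rewrite /iota0 /= !tupd_eval.
  exact: (@teq_add k A (fun u v : A => u + v) (fun (c : k) (u : A) => c *: u) (fun _ => True) D).
- move=> f a c u _ _ g; rewrite /iota0 /= !tupd_eval.
  exact: (@teq_smul k A (fun u v : A => u + v) (fun (c : k) (u : A) => c *: u) (fun _ => True) D).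
Qed.

End Iota0.

Section Good.
Variables (k : fieldType) (A : comAlgType k) (G : zmodType) (le : rel G) (D : finType).
Variable (Hle : ordered_group le).
Local Notation H1 := (@hahn1 G le A).

Inductive Good : ((G -> A) -> k) -> Prop :=
| Gb (x : G) (phi : A -> k) : linf phi -> Good (fun w => phi (w x))
| Gc (c : k) p1 p2 : Good p1 -> Good p2 -> Good (fun w => c * p1 w + p2 w).

Lemma Good_comb psi c (u v : G -> A) : Good psi -> psi (fun x => c *: u x + v x) = c * psi u + psi v.
Proof.
elim => {psi} [x phi lphi|c' p1 p2 _ I1 _ I2]; first exact: lphi.
by rewrite I1 I2; ring.
Qed.

Lemma Good0 psi : Good psi -> psi (fun _ => 0) = 0.
Proof.
move=> gp; have := Good_comb 1 (fun _ => 0) (fun _ => 0) gp.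
have -> : (fun x : G => 1 *: (0 : A) + 0) = (fun _ => 0) by apply: funext => x; rewrite addr0 scaler0.
rewrite mul1r => E; apply: (@addIr _ (psi (fun _ => 0))); by rewrite add0r -E.
Qed.

Lemma Good_add psi u v : Good psi -> psi (hadd u v) = psi u + psi v.
Proof.
move=> gp; rewrite -[psi u]mul1r -Good_comb //; congr psi; apply: funext => x.
by rewrite scale1r.
Qed.

Lemma Good_scale psi c u : Good psi -> psi (hscale c u) = c * psi u.
Proof.
move=> gp; rewrite -[c * _]addr0 -(Good0 gp) -Good_comb //; congr psi; apply: funext => x.
by rewrite addr0.
Qed.

Lemma Good_sumlin psi r (c : 'I_r -> k) (e : 'I_r -> G -> A) v : Good psi ->
  psi (fun x => \sum_(j < r) c j *: e j x + v x) = \sum_(j < r) c j * psi (e j) + psi v.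
Proof.
move=> gp; elim: r c e => [|r IH] c e.
  rewrite big_ord0 add0r; congr psi; apply: funext => x; by rewrite big_ord0 add0r.
rewrite big_ord_recr /= addrAC -IH addrC -Good_comb //; congr psi; apply: funext => x.
by rewrite big_ord_recr /= addrCA addrA.
Qed.

Lemma Good_sum p0 r (c : 'I_r -> k) (q : 'I_r -> (G -> A) -> k) :
  Good p0 -> (forall i, Good (q i)) -> Good (fun v => \sum_(i < r) c i * q i v + p0 v).
Proof.
move=> g0; elim: r c q => [|r IH] c q gq.
  have -> : (fun v => \sum_(i < 0) c i * q i v + p0 v) = p0.
    by apply: funext => v; rewrite big_ord0 add0r.
  done.
have -> : (fun v => \sum_(i < r.+1) c i * q i v + p0 v) =
   (fun v => c ord_max * q ord_max v + (\sum_(i < r) c (widen_ord (leqnSn r) i) * q (widen_ord (leqnSn r) i) v + p0 v)).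
  by apply: funext => v; rewrite big_ord_recr /= addrCA addrA [_ + c _ * _]addrC.
apply: Gc => //; exact: IH.
Qed.


Lemma ev_basic (phi : D -> A -> k) (g : {ffun D -> G}) (z : tH A G D) :
  ev (fun a (w : G -> A) => phi a (w (g a))) z = ev phi (iota0 z g).
Proof.
rewrite /ev /iota0 big_map; apply: eq_bigr => p _ /=; congr (_ * _).
by apply: eq_bigr => a _; rewrite ffunE.
Qed.

Definition basic (chi : (G -> A) -> k) := exists xp : G * (A -> k), linf xp.2 /\ chi = fun w => xp.2 (w xp.1).

Lemma evH_good (z : tH A G D) :
  (forall phi : D -> A -> k, (forall a, linf (phi a)) -> forall g, ev phi (iota0 z g) = 0) ->
  forall psi, (forall a, Good (psi a)) -> ev psi z = 0.
Proof.
move=> Hz.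
suff: forall s : seq D, forall psi, (forall a, Good (psi a)) -> (forall a, a \notin s -> basic (psi a)) ->
  ev psi z = 0.
  move=> H psi gp; apply: (H (enum D)) => // a; by rewrite mem_enum.
elim => [|a s IH] psi gp bas.
  have X a : {xp : G * (A -> k) | linf xp.2 /\ psi a = fun w => xp.2 (w xp.1)}.
    apply: boolp.cid; exact: bas.
  have -> : psi = fun a (w : G -> A) => (projT1 (X a)).2 (w ([ffun a => (projT1 (X a)).1] a)).
    apply: boolp.functional_extensionality_dep => a; rewrite ffunE.
    by case: (projT2 (X a)).
  rewrite (ev_basic (fun a => (projT1 (X a)).2)); apply: Hz => b; by case: (projT2 (X b)).
rewrite -(upd_id psi a).
have : Good (psi a) by [].
elim => [x phi lphi|c p1 p2 _ I1 _ I2]; last by rewrite ev_upd_comb I1 I2 mulr0 addr0.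
apply: IH.
  move=> b; rewrite /upd; case: eqP => _ //; exact: Gb.
move=> b bs; rewrite /upd; case: eqP => [_|/eqP nb].
  by exists (x, phi).
by apply: bas; rewrite inE negb_or nb.
Qed.

Lemma sep (w : G -> A) x : w x != 0 -> exists psi, Good psi /\ psi w = 1.
Proof.
move=> nz; have [phi [lphi phi1]] := exists_functional nz.
exists (fun v => phi (v x)); split => //; exact: Gb.
Qed.

End Good.

Section Dual.
Variables (k : fieldType) (A : comAlgType k) (G : zmodType) (le : rel G) (D : finType).
Variable (Hle : ordered_group le).
Local Notation H1 := (@hahn1 G le A).

Lemma sum_delta r (c : nat -> k) i : (i < r)%N -> \sum_(j < r) c j * (i == j)%:R = c i.
Proof.
move=> ir; rewrite (bigD1 (Ordinal ir)) //= eqxx mulr1 big1 ?addr0 // => j nj.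
have -> : (i == j :> nat) = false by apply/negbTE; apply: contra nj => /eqP e; apply/eqP/val_inj.
by rewrite mulr0.
Qed.

Lemma sum_delta' r (c : nat -> k) i : (i < r)%N -> \sum_(j < r) c j * (j == i :> nat)%:R = c i.
Proof. move=> ir; rewrite -(sum_delta c ir); apply: eq_bigr => j _; by rewrite eq_sym. Qed.

Lemma dual (ws : seq (G -> A)) : (forall w, List.In w ws -> H1 w) ->
  exists r (e : nat -> G -> A) (psi : nat -> (G -> A) -> k),
   [/\ forall i, (i < r)%N -> H1 (e i) /\ Good (psi i),
       forall i j, (i < r)%N -> (j < r)%N -> psi i (e j) = (i == j)%:R &
       forall w, List.In w ws -> w = fun x => \sum_(i < r) psi i w *: e i x].
Proof.
elim: ws => [|w ws IH] Hall.
  exists 0%N, (fun _ _ => 0), (fun _ _ => 0); split => //.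
have [r [e [psi [He Hd Hs]]]] := IH (fun w' Hw' => Hall w' (or_intror Hw')).
have Hw : H1 w by apply: Hall; left.
pose u := fun x => \sum_(i < r) (- psi i w) *: e i x + w x.
have Hu : H1 u.
  rewrite /u; apply: (hahn1_add Hle _ Hw).
  have HH : forall i : 'I_r, H1 (e i) by move=> i; case: (He i (ltn_ord i)).
  exact: (hahn1_sum Hle (fun i : 'I_r => - psi i w) (e := fun i : 'I_r => e i) HH).
have psi_u : forall i, (i < r)%N -> psi i u = 0.
  move=> i ir; have [_ gi] := He i ir; rewrite /u Good_sumlin //.
  rewrite (eq_bigr (fun j : 'I_r => (- psi j w) * (i == j)%:R)); last first.
    by move=> j _; rewrite Hd.
  by rewrite (sum_delta (fun j => - psi j w) ir) addNr.
case: (classic (exists x0, u x0 != 0)) => [[x0 nz]|nu].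
- have [psi0 [g0 p0u]] := sep nz.
  pose psin := fun v => \sum_(i < r) (- psi0 (e i)) * psi i v + psi0 v.
  have gn : Good psin.
    rewrite /psin; apply: (Good_sum (fun i : 'I_r => - psi0 (e i)) (q := fun i : 'I_r => psi i)) => // i.
    by case: (He i (ltn_ord i)).
  have psin_v : forall v, psin v = psi0 (fun x => \sum_(i < r) (- psi i v) *: e i x + v x).
    move=> v; rewrite Good_sumlin //; congr (_ + _); apply: eq_bigr => i _.
    by rewrite !mulNr mulrC.
  have psin_e : forall j, (j < r)%N -> psin (e j) = 0.
    move=> j jr; rewrite /psin (eq_bigr (fun i : 'I_r => (- psi0 (e i)) * (i == j :> nat)%:R)); last first.
      by move=> i _; rewrite Hd.
    by rewrite (sum_delta' (fun i => - psi0 (e i)) jr) addNr.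
  have psin_u : psin u = 1.
    rewrite /psin big1 ?add0r // => i _; by rewrite psi_u // mulr0.
  exists r.+1, (fun i => if i == r then u else e i), (fun i => if i == r then psin else psi i).
  split.
  + move=> i; rewrite ltnS leq_eqVlt; case: eqP => [_ _|_ /= ir]; first by split.
    exact: He.
  + move=> i j; rewrite !ltnS => ir jr.
    case: (eqVneq i r) => [ei|ni]; case: (eqVneq j r) => [ej|nj]; rewrite ?ei ?ej ?eqxx ?(negbTE ni) ?(negbTE nj).
    * by [].
    * have jr' : (j < r)%N by rewrite ltn_neqAle nj jr.
      by rewrite psin_e // eq_sym (ltn_eqF jr').
    * have ir' : (i < r)%N by rewrite ltn_neqAle ni ir.
      by rewrite psi_u // (ltn_eqF ir').
    * by rewrite Hd // ltn_neqAle ?ni ?nj.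
  + move=> w' [<-|Hin].
      have pw : psin w = 1 by rewrite psin_v; exact: p0u.
      apply: funext => x; rewrite big_ord_recr /= eqxx pw scale1r /u.
      rewrite addrA -big_split /= big1 ?add0r // => i _.
      by rewrite (ltn_eqF (ltn_ord i)) scaleNr addrN.
    have Hx : forall x, w' x = \sum_(i < r) psi i w' *: e i x.
      move=> x; exact: (f_equal (fun f => f x) (Hs w' Hin)).
    have E : (fun x => \sum_(i < r) (- psi i w') *: e i x + w' x) = (fun _ => 0).
      apply: funext => x; rewrite Hx -big_split /= big1 // => i _; by rewrite scaleNr addNr.
    have p0 : psin w' = 0 by rewrite psin_v E Good0.
    apply: funext => x; rewrite big_ord_recr /= eqxx p0 scale0r addr0 Hx.
    apply: eq_bigr => i _; by rewrite (ltn_eqF (ltn_ord i)).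
- exists r, e, psi; split => //.
  move=> w' [<-|]; last exact: Hs.
  apply: funext => x.
  have : u x = 0 by case: (eqVneq (u x) 0) => // nz; exfalso; apply: nu; exists x.
  rewrite /u => /eqP; rewrite addr_eq0 => /eqP H.
  rewrite -[w x]opprK -H -sumrN; apply: eq_bigr => i _; by rewrite scaleNr opprK.
Qed.

End Dual.

Section Compl.
Variables (k : fieldType) (A : comAlgType k) (G : zmodType) (le : rel G) (D : finType).
Variable (Hle : ordered_group le).
Local Notation H1 := (@hahn1 G le A).
Local Notation TH := (@teqH k A G le D).
Local Notation tH := (tH A G D).

Definition allH (z : tH) := forall p, List.In p z -> forall a, H1 (p.2 a).

Lemma allH_in (z : tH) : allH z <-> tH_in le z.
Proof.
rewrite /tH_in /fs_in; elim: z => [|p z [IH1 IH2]]; first by split => // _ p [].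
split.
  move=> H [|i] /=; first by move=> _ a; apply: H; left.
  move=> iz a; apply: IH1 => // q Hq; apply: H; by right.
move=> H q [<-|Hq].
  by move=> a; exact: (H 0%N).
apply: IH2 => // i iz a; exact: (H i.+1).
Qed.

Lemma expand c (f : {ffun D -> G -> A}) a r (lam : 'I_r -> k) (e : 'I_r -> G -> A) :
  (forall b, b != a -> H1 (f b)) -> (forall i, H1 (e i)) ->
  TH [:: (c, tupd f a (fun x => \sum_(i < r) lam i *: e i x))]
     (\big[cat/[::]]_(i < r) [:: (c * lam i, tupd f a (e i))]).
Proof.
move=> Hf; elim: r lam e => [|r IH] lam e He.
  rewrite big_ord0.
  eapply T_zero_factor with (a := a) (u := fun _ : G => (0 : A)).
  - by move=> b nb; rewrite ffunE (negbTE nb); apply: Hf.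
  - exact: hahn1_0.
  - rewrite ffunE eqxx; apply: funext => x; by rewrite big_ord0 /hscale scaler0.
set lam' := fun i : 'I_r => lam (widen_ord (leqnSn r) i).
set e' := fun i : 'I_r => e (widen_ord (leqnSn r) i).
have HS : H1 (fun x => \sum_(i < r) lam' i *: e' i x) by apply: hahn1_sum => // i; apply: He.
have HE : H1 (hscale (lam ord_max) (e ord_max)) by apply: hahn1_scale.
have -> : (fun x => \sum_(i < r.+1) lam i *: e i x) =
  hadd (fun x => \sum_(i < r) lam' i *: e' i x) (hscale (lam ord_max) (e ord_max)).
  by apply: funext => x; rewrite big_ord_recr.
rewrite big_ord_recr /=.
have E0 := teq_scale c (teq_add (@hadd _ _ G) (@hscale _ _ G) Hf HS HE).
rewrite /fs_scale /= !mulr1 in E0.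
apply: teq_trans E0 _.
rewrite -cat1s; apply: teq_cat; first exact: (IH lam' e' (fun i => He _)).
have E1 := teq_scale c (teq_smul (@hadd _ _ G) (@hscale _ _ G) (lam ord_max) Hf (He ord_max)).
rewrite /fs_scale /= !mulr1 in E1; exact: E1.
Qed.

Lemma expand_list a0 r (e : nat -> G -> A) (psi : nat -> (G -> A) -> k) (z : tH) :
  (forall i, (i < r)%N -> H1 (e i)) -> allH z ->
  (forall p, List.In p z -> p.2 a0 = fun x => \sum_(i < r) psi i (p.2 a0) *: e i x) ->
  TH z (\big[cat/[::]]_(i < r) [seq (p.1 * psi i (p.2 a0), tupd p.2 a0 (e i)) | p : (k * {ffun D -> G -> A})%type <- z]).
Proof.
move=> He; elim: z => [|[c f] z IH] Hz Hs.
  rewrite /= big1_eq; exact: teq_refl.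
have E2 : TH z (\big[cat/[::]]_(i < r) [seq (p.1 * psi i (p.2 a0), tupd p.2 a0 (e i)) | p : (k * {ffun D -> G -> A})%type <- z]).
  apply: IH => [q Hq|q Hq]; [apply: Hz; by right | apply: Hs; by right].
have E1 : TH [:: (c, f)] (\big[cat/[::]]_(i < r) [:: (c * psi i (f a0), tupd f a0 (e i))]).
  have Hsp : f a0 = fun x => \sum_(i < r) psi i (f a0) *: e i x by apply: (Hs (c, f)); left.
  have Hf : forall b, b != a0 -> H1 (f b) by move=> b _; apply: (Hz (c, f)); left.
  have := @expand c f a0 r (fun i : 'I_r => psi i (f a0)) (fun i : 'I_r => e i) Hf
    (fun i => He i (ltn_ord i)).
  by rewrite /= -Hsp tupd_id.
have := teq_trans (teq_cat E1 E2) (T_bigcat_swap _ _ _ _ _).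
rewrite cat1s; exact.
Qed.

Definition unif (S : {set D}) (z : tH) :=
  forall p q, List.In p z -> List.In q z -> forall a, a \in S -> p.2 a = q.2 a.

Definition Zev (z : tH) := forall psi : D -> (G -> A) -> k, (forall a, Good (psi a)) -> ev psi z = 0.

Lemma ev_const (psi : D -> (G -> A) -> k) (f : {ffun D -> G -> A}) (z : tH) :
  (forall p, List.In p z -> p.2 = f) -> ev psi z = (\sum_(p <- z) p.1) * \prod_(a : D) psi a (f a).
Proof.
elim: z => [|p z IH] H; first by rewrite /ev !big_nil mul0r.
rewrite /ev !big_cons -/(ev psi z) IH; last by move=> q Hq; apply: H; right.
by rewrite (H p) ?mulrDl //; left.
Qed.

Lemma complete n : forall (S : {set D}) (z : tH), #|~: S| = n -> allH z -> unif S z -> Zev z -> TH z [::].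
Proof.
elim: n => [|n IHn] S z cS Hz U Zz.
  have ST : forall a, a \in S.
    move=> a; apply/negPn/negP => na.
    by move/cards0_eq: cS => /setP /(_ a); rewrite !inE na.
  case: z Hz U Zz => [|p0 z'] Hz U Zz; first exact: teq_refl.
  set f := p0.2.
  have Hf : forall p, List.In p (p0 :: z') -> p.2 = f.
    move=> p Hp; apply/ffunP => a; apply: U; [exact: Hp | by left | exact: ST].
  apply: teq_trans (T_merge_all _ _ _ Hf) _.
  case: (classic (exists a, forall x, f a x = 0)) => [[a Ha]|na].
    eapply T_zero_factor with (a := a) (u := fun _ : G => (0 : A)).
    - move=> b _; exact: (Hz p0 (or_introl erefl)).
    - exact: hahn1_0.
    - apply: funext => x; by rewrite Ha /hscale scaler0.
  have Ex : forall a, exists psi, Good psi /\ psi (f a) = 1.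
    move=> a; case: (classic (exists x, f a x != 0)) => [[x nz]|nx]; first exact: sep nz.
    exfalso; apply: na; exists a => x; case: (eqVneq (f a x) 0) => // nz; exfalso; apply: nx; by exists x.
  have X a := boolp.cid (Ex a).
  have := Zz (fun a => projT1 (X a)) (fun a => proj1 (projT2 (X a))).
  have P1 : \prod_(a : D) projT1 (X a) (f a) = 1 by apply: big1 => a _; case: (projT2 (X a)).
  rewrite (ev_const _ Hf) P1 mulr1.
  move=> ->; exact: teq_zero.
have [a0 Ha0] : exists a0, a0 \in ~: S.
  apply/set0Pn; rewrite -card_gt0 cS //.
have cS' : #|~: (a0 |: S)| = n.
  have := cardsD1 a0 (~: S); rewrite Ha0 cS add1n => [[]] ->.
  apply: eq_card => b; rewrite !inE; by case: (b == a0).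
have Hws : forall w, List.In w [seq p.2 a0 | p : (k * {ffun D -> G -> A})%type <- z] -> H1 w.
  move=> w /List.in_map_iff [p [<- Hp]]; exact: Hz.
have [r [e [psi [He Hd Hs]]]] := dual Hle Hws.
have He' : forall i, (i < r)%N -> H1 (e i) by move=> i ir; case: (He i ir).
have Hsp : forall p, List.In p z -> p.2 a0 = fun x => \sum_(i < r) psi i (p.2 a0) *: e i x.
  move=> p Hp; apply: Hs; apply/List.in_map_iff; by exists p.
apply: teq_trans (expand_list He' Hz Hsp) _.
apply: T_big_nil => i.
apply: (IHn (a0 |: S)) => //.
- move=> q /List.in_map_iff [p [<- Hp]] b /=; rewrite ffunE; case: eqP => _.
    exact: He' (ltn_ord i).
  exact: Hz.
- move=> q1 q2 /List.in_map_iff [p1 [<- Hp1]] /List.in_map_iff [p2 [<- Hp2]] b /=.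
  rewrite /tupd !ffunE !inE; case: eqP => //= _ bS; exact: U.
- move=> chi gchi.
  have -> : ev chi [seq (p.1 * psi i (p.2 a0), tupd p.2 a0 (e i)) | p : (k * {ffun D -> G -> A})%type <- z] =
            chi a0 (e i) * ev (upd chi a0 (psi i)) z.
    rewrite /ev big_map mulr_sumr; apply: eq_bigr => p _ /=.
    rewrite prod_tupd prod_upd; ring.
  rewrite Zz ?mulr0 // => b; rewrite /upd; case: eqP => _ //.
  by case: (He i (ltn_ord i)).
Qed.

End Compl.

Section Main.
Variables (k : fieldType) (A : comAlgType k) (G : zmodType) (le : rel G) (D : finType).
Variable (Hle : ordered_group le).
Local Notation H1 := (@hahn1 G le A).
Local Notation TH := (@teqH k A G le D).
Local Notation TA := (@teqA k A D).
Local Notation tH := (tH A G D).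
Local Notation elt := (k * {ffun D -> G -> A})%type.
Local Notation eltA := (k * {ffun D -> A})%type.

Lemma linf0 (phi : A -> k) : linf phi -> phi 0 = 0.
Proof.
move=> l; have := l 1 0 0; rewrite scale1r addr0 mul1r => E.
by apply: (@addIr _ (phi 0)); rewrite add0r -E.
Qed.

Lemma allH_cat (x y : tH) : allH le x -> allH le y -> allH le (x ++ y).
Proof. move=> hx hy p Hp; case: (List.in_app_or _ _ _ Hp) => H; [exact: hx | exact: hy]. Qed.

Lemma allH_scale c (x : tH) : allH le x -> allH le (fs_scale c x).
Proof. by move=> hx p /List.in_map_iff [q [<- Hq]] a; exact: hx Hq a. Qed.

Lemma TA_zero_term (p : eltA) al : p.2 al = 0 -> TA [:: p] [::].
Proof.
case: p => c f /= fa.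
eapply T_zero_factor with (a := al) (u := (0 : A)) => //.
by rewrite fa scaler0.
Qed.

Theorem inj (x y : tH) : tH_in le x -> tH_in le y ->
  (forall g, TA (iota0 x g) (iota0 y g)) -> TH x y.
Proof.
move=> /allH_in hx /allH_in hy Hg; apply: T_of_sub.
have Hz : allH le (x ++ fs_scale (-1) y) by apply: allH_cat => //; exact: allH_scale.
apply: (complete Hle (n := #|~: (set0 : {set D})|) (S := set0)) => //.
  by move=> p q _ _ a; rewrite inE.
apply: evH_good => phi lphi g.
rewrite iota0_cat iota0_scale ev_cat ev_scale.
have -> : ev phi (iota0 x g) = ev phi (iota0 y g).
  apply: ev_teq (Hg g).
  - by move=> a u v _ _; rewrite -[u]scale1r lphi mul1r scale1r.
  - by move=> a c u _; rewrite -[c *: u]addr0 lphi linf0 ?addr0.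
by rewrite mulN1r addrN.
Qed.

Lemma iota0_mono (g : {ffun D -> G}) (z : tH) d :
  TA (iota0 (tH_mul_mono le g z) d) (if mle le g d then iota0 z (msub d g) else [::]).
Proof.
case: ifP => Hm.
  have -> : iota0 (tH_mul_mono le g z) d = iota0 z (msub d g).
    rewrite /iota0 /tH_mul_mono -map_comp; apply: eq_map => p /=; congr (_, _).
    apply/ffunP => al; rewrite !ffunE /shift1.
    by move/forallP: Hm => /(_ al) ->.
  exact: teq_refl.
have [al nal] : exists al, ~~ le (g al) (d al).
  apply/existsP; move/negbT: Hm; by rewrite negb_forall.
apply: T_all_nil => p /List.in_map_iff [q [<- Hq]].
move: Hq => /List.in_map_iff [q' [<- _]].
apply: (@TA_zero_term _ al) => /=; by rewrite !ffunE /shift1 (negbTE nal).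
Qed.

Lemma wo_list (z : tH) (d : G) al : le 0 d -> allH le z ->
  well_ordered le (fun x => exists p, List.In p z /\ (le x d /\ le 0 x /\ p.2 al x != 0)).
Proof.
move=> d0; elim: z => [|p z IH] hz.
  by move=> T TS [x Tx]; case: (TS x Tx) => p [[]].
have IH' := IH (fun q Hq => hz q (or_intror Hq)).
have [_ Wp] := hz p (or_introl erefl) al.
apply: (wo_sub (wo_union Hle (Wp d d0) IH')) => x [q [[<-|Hq] Hx]]; first by left.
by right; exists q.
Qed.

Lemma iota0_ok (z : tH) : allH le z -> tseries_ok le (iota0 z).
Proof.
move=> hz; split.
  move=> g nz al; apply/idPn => n0; apply: nz.
  apply: T_all_nil => p /List.in_map_iff [q [<- Hq]].
  apply: (@TA_zero_term _ al); rewrite /= ffunE.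
  have [s _] := hz q Hq al.
  case: (eqVneq (q.2 al (g al)) 0) => // /s h; by rewrite h in n0.
move=> d d0 al.
apply: (wo_sub (wo_list (al:=al) (d0 al) hz)) => x [Lx [g [gx Hb nz]]].
case: (classic (exists p, List.In p z /\ p.2 al x != 0)) => [[p [Hp nzp]]|np].
  exists p; split => //; split => //; split => //.
  have [s _] := hz p Hp al; exact: s.
exfalso; apply: nz; apply: T_all_nil => p /List.in_map_iff [q [<- Hq]].
apply: (@TA_zero_term _ al); rewrite /= ffunE gx.
case: (eqVneq (q.2 al x) 0) => // nzq; exfalso; apply: np; by exists q.
Qed.

Lemma source_to_target m (gs : 'I_m -> {ffun D -> G}) (x : tH) :
  in_source_ideal le gs x -> in_target_ideal le gs (iota0 x).
Proof.
move=> [zs [Hzs Hx]].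
exists (fun i => iota0 (zs i)); split.
  move=> i; apply: iota0_ok; exact/allH_in.
move=> d; apply: teq_trans (iota0_teq Hx d) _.
rewrite iota0_bigcat; apply: T_big => i; exact: iota0_mono.
Qed.

Definition Hop (g : {ffun D -> G}) (z : tH) : tH :=
  [seq (p.1, [ffun a => fun x => if le (g a) x then p.2 a x else 0]) | p : elt <- z].
Definition unsh (g : {ffun D -> G}) (z : tH) : tH :=
  [seq (p.1, [ffun a => fun x => if le 0 x then p.2 a (x + g a) else 0]) | p : elt <- z].
Definition Lop g z := z ++ fs_scale (-1) (Hop g z).

Lemma Hop_mono g z : Hop g z = tH_mul_mono le g (unsh g z).
Proof.
rewrite /Hop /tH_mul_mono /unsh -map_comp; apply: eq_map => p /=; congr (_, _).
apply/ffunP => a; rewrite !ffunE; apply: funext => x; rewrite /shift1.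
case: ifP => h //; by rewrite le_sub0 // h subrK.
Qed.

Lemma allH_Hop g z : allH le z -> allH le (Hop g z).
Proof.
move=> hz p /List.in_map_iff [q [<- Hq]] a /=; rewrite ffunE.
apply: hahn1_cut; exact: hz.
Qed.

Lemma allH_unsh g z : mnonneg le g -> allH le z -> allH le (unsh g z).
Proof.
move=> g0 hz p /List.in_map_iff [q [<- Hq]] a /=; rewrite ffunE.
apply: hahn1_unshift => //; exact: hz.
Qed.

Lemma allH_Lop g z : allH le z -> allH le (Lop g z).
Proof. move=> hz; apply: allH_cat => //; apply: allH_scale; exact: allH_Hop. Qed.

Lemma iota0_Hop g z d :
  TA (iota0 (Hop g z) d) (if mle le g d then iota0 z d else [::]).
Proof.
case: ifP => Hm.
  have -> : iota0 (Hop g z) d = iota0 z d.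
    rewrite /iota0 /Hop -map_comp; apply: eq_map => p /=; congr (_, _).
    apply/ffunP => al; rewrite !ffunE.
    by move/forallP: Hm => /(_ al) ->.
  exact: teq_refl.
have [al nal] : exists al, ~~ le (g al) (d al).
  apply/existsP; move/negbT: Hm; by rewrite negb_forall.
apply: T_all_nil => p /List.in_map_iff [q [<- Hq]].
move: Hq => /List.in_map_iff [q' [<- _]].
apply: (@TA_zero_term _ al) => /=; by rewrite !ffunE (negbTE nal).
Qed.

Lemma TH_split (z h : tH) : TH z (h ++ (z ++ fs_scale (-1) h)).
Proof.
apply: teq_sym; rewrite catA.
apply: teq_trans (T_catl _ (teq_swap _ _ _ _ _)) _.
rewrite -catA; rewrite -{2}[z]cats0; apply: T_catr; exact: T_neg'.
Qed.

Lemma decomp m : forall (gs : 'I_m -> {ffun D -> G}), (forall i, mnonneg le (gs i)) ->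
  forall z : tH, allH le z ->
  exists zs : 'I_m -> tH, (forall i, allH le (zs i)) /\
  exists r : tH, [/\ allH le r,
    TH z ((\big[cat/[::]]_(i < m) tH_mul_mono le (gs i) (zs i)) ++ r) &
    forall d, TA (iota0 r d) (if [exists i, mle le (gs i) d] then [::] else iota0 z d)].
Proof.
elim: m => [|m IH] gs Hg z hz.
  exists (fun _ => [::]); split; first by move=> i p [].
  exists z; split => //.
    rewrite big_ord0; exact: teq_refl.
  move=> d; have -> : [exists i : 'I_0, mle le (gs i) d] = false.
    by apply/existsP => [[[i Hi]]].
  exact: teq_refl.
set g0 := gs ord0.
have [zs' [Hzs' [r [hr Hr Hrd]]]] := IH (fun i => gs (lift ord0 i)) (fun i => Hg _) (Lop g0 z) (allH_Lop (g:=g0) hz).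
exists (fun i => if unlift ord0 i is Some j then zs' j else unsh g0 z); split.
  move=> i; case: (unlift ord0 i) => [j|]; first exact: Hzs'.
  exact: allH_unsh (Hg ord0) hz.
exists r; split => //.
  rewrite big_ord_recl unlift_none.
  under eq_bigr => i _ do rewrite liftK.
  rewrite -catA -Hop_mono.
  apply: teq_trans (TH_split z (Hop g0 z)) _.
  apply: T_catr; exact: Hr.
move=> d; apply: teq_trans (Hrd d) _.
case: ifP => E1.
  have -> : [exists i, mle le (gs i) d].
    by move/existsP: E1 => [j Hj]; apply/existsP; exists (lift ord0 j).
  exact: teq_refl.
rewrite /Lop iota0_cat iota0_scale.
have HH := iota0_Hop g0 z d.
case: ifP HH => Hm HH.
  have -> : [exists i, mle le (gs i) d] by apply/existsP; exists ord0.
  apply: teq_trans (T_catr _ (teq_scale (-1) HH)) _; exact: T_neg'.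
have -> : [exists i, mle le (gs i) d] = false.
  apply/existsP => [[i Hi]]; case: (unliftP ord0 i) Hi => [j ->|->] Hi.
    by move/negbT: E1 => /existsP; apply; exists j.
  by rewrite Hi in Hm.
rewrite -{2}[iota0 z d]cats0; apply: T_catr; exact: (teq_scale (-1) HH).
Qed.

Lemma target_to_source m (gs : 'I_m -> {ffun D -> G}) (x : tH) :
  (forall i, mnonneg le (gs i)) -> tH_in le x ->
  in_target_ideal le gs (iota0 x) -> in_source_ideal le gs x.
Proof.
move=> Hg /allH_in hx [h [hok Hh]].
have [zs [Hzs [r [hr Hr Hrd]]]] := decomp Hg hx.
exists zs; split; first by move=> i; apply/allH_in.
have Hr0 : TH r [::].
  apply: inj; [exact/allH_in | exact/allH_in | ] => d.
  apply: teq_trans (Hrd d) _; case: ifP => E; first exact: teq_refl.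
  apply: teq_trans (Hh d) _.
  have -> : \big[cat/[::]]_(i < m) (if mle le (gs i) d then h i (msub d (gs i)) else [::]) = [::].
    rewrite (eq_bigr (fun _ => [::])) ?big1_eq // => i _.
    case: ifP => // Hi; move/negbT: E => /existsP; by case; exists i.
  exact: teq_refl.
apply: teq_trans Hr _; rewrite -{2}[\big[cat/[::]]_(i < m) _]cats0; apply: T_catr; exact: Hr0.
Qed.

End Main.

Theorem mainTheorem6 (k : fieldType) (A : comAlgType k) (D : finType)
    (G : zmodType) (le : rel G) :
  ordered_group le -> noetherian A ->
  (forall x y : tH A G D, tH_in le x -> tH_in le y ->
     (forall g, teqA (iota0 x g) (iota0 y g)) -> teqH le x y) /\
  (forall (m : nat) (gs : 'I_m -> {ffun D -> G}),
     (forall i, mnonneg le (gs i)) ->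
     forall x : tH A G D, tH_in le x ->
       (in_target_ideal le gs (iota0 x) <-> in_source_ideal le gs x)).
Proof.
move=> Hle _; split.
  move=> x y hx hy H; exact: (inj Hle hx hy H).
move=> m gs Hg x hx; split.
  exact: (target_to_source Hle Hg hx).
exact: (source_to_target Hle).
Qed.
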